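(* Let $\mathcal{M} = \{ t \in \mathbb{C}_2 : \text{the forward orbits of both critical points } 0 \text{ and } 1 \text{ under } f_t \text{ are bounded}\}$. Then $1 \in \mathcal{M}$, and $t = 1$ is a non-isolated boundary point of $\mathcal{M}$. That is, every $2$-adic neighborhood of $1$ in $\mathbb{C}_2$ contains parameters $t \notin \mathcal{M}$ and also parameters $t \in \mathcal{M}$ with $t \neq 1$.
   Context: Let $|\cdot|$ denote the $2$-adic absolute value on $\mathbb{C}_2$, normalized by $|2| = 1/2$. For $t \in \mathbb{C}_2$, let $f_t(z) = -\tfrac32 t(-2z^3+3z^2) + 1 \in \mathbb{C}_2[z]$. The critical points of $f_t$ are $0$ and $1$. Since $f_t(0) = 1$, the orbit of $0$ is bounded if and only if the orbit of $1$ is bounded. The forward orbit of $z$ under $f$ is $\{f^n(z) : n \ge 0\}$, where $f^n$ is the $n$-fold iterate of $f$. A map is called post-critically bounded (PCB) if all critical points have bounded forward orbits, and post-critically finite (PCF) if all critical points have finite forward orbits. *)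

(* Defs.v *)
From mathcomp Require Import all_boot all_order all_algebra.
From mathcomp Require Import reals.
Set Implicit Arguments. Unset Strict Implicit. Unset Printing Implicit Defensive.
Import Order.TTheory GRing.Theory Num.Theory.
Local Open Scope ring_scope.

(* C_2 is characterized (up to isometric isomorphism) as an algebraically
   closed field K with a non-archimedean absolute value |.| : K -> R,
   normalized by |2| = 1/2, complete, in which the algebraic numbers
   (roots of nonzero rational polynomials) are dense. *)

Definition algebraic_over_Q (K : fieldType) (y : K) : Prop :=
  exists p : {poly rat}, p != 0 /\ root (map_poly ratr p) y.

Record is_C2 (R : realType) (K : closedFieldType) (abs : K -> R) : Prop := {
  abs_ge0 : forall x, 0 <= abs x;
  abs_eq0 : forall x, abs x = 0 <-> x = 0;
  absM : forall x y, abs (x * y) = abs x * abs y;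
  abs_ultra : forall x y, abs (x + y) <= Num.max (abs x) (abs y);
  abs2 : abs 2%:R = 2%:R^-1;
  abs_complete : forall u : nat -> K,
    (forall e, 0 < e -> exists N, forall m n, (N <= m)%N -> (N <= n)%N ->
        abs (u m - u n) < e) ->
    exists l, forall e, 0 < e -> exists N, forall n, (N <= n)%N -> abs (u n - l) < e;
  alg_dense : forall x e, 0 < e -> exists y, algebraic_over_Q y /\ abs (x - y) < e
}.

Definition f_t (K : fieldType) (t z : K) : K :=
  - (3%:R / 2%:R) * t * (- (2%:R) * z ^+ 3 + 3%:R * z ^+ 2) + 1.

Definition bounded_orbit (R : realType) (K : fieldType) (abs : K -> R)
    (t z : K) : Prop :=
  exists B : R, forall n : nat, abs (iter n (f_t t) z) <= B.

Definition in_M (R : realType) (K : fieldType) (abs : K -> R) (t : K) : Prop :=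
  bounded_orbit abs t 0 /\ bounded_orbit abs t 1.

(* Main.v *)
Require Import Defs.
From mathcomp Require Import all_boot all_order all_algebra.
From mathcomp Require Import reals ring lra.
Import Order.TTheory GRing.Theory Num.Theory.
Local Open Scope ring_scope.

Section S.
Variables (R : realType) (K : closedFieldType) (abs : K -> R).
Hypothesis HC : is_C2 abs.

Lemma abs0 : abs 0 = 0. Proof. by apply/(abs_eq0 HC). Qed.
Lemma absne0 x : x != 0 -> 0 < abs x.
Proof. move=> /eqP h; rewrite lt_def (abs_ge0 HC) andbT; apply/eqP=> /(abs_eq0 HC); exact h. Qed.
Lemma abs1 : abs 1 = 1.
Proof.
have h := absM HC 1 1; rewrite mulr1 in h.
have p := absne0 _ (oner_neq0 K).
have : abs 1 * (abs 1 - 1) = 0 by rewrite mulrBr mulr1 -h subrr.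
by move/eqP; rewrite mulf_eq0 subr_eq0 (gt_eqF p) /= => /eqP.
Qed.
Lemma absN x : abs (- x) = abs x.
Proof.
have h : abs (-1) = 1.
  have e := absM HC (-1) (-1); rewrite mulrNN mulr1 abs1 in e.
  have g := abs_ge0 HC (-1).
  have : (abs (-1) - 1) * (abs (-1) + 1) = 0 by rewrite mulrDr mulrBl -e; ring.
  move/eqP; rewrite mulf_eq0 subr_eq0 => /orP [/eqP //|]; rewrite addr_eq0 => /eqP e2.
  by move: g; rewrite e2 oppr_ge0 ler10.
by rewrite -mulN1r (absM HC) h mul1r.
Qed.
Lemma absV x : abs (x^-1) = (abs x)^-1.
Proof.
have [->|nz] := eqVneq x 0; first by rewrite invr0 abs0 invr0.
have e := absM HC x x^-1; rewrite mulfV // abs1 in e.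
have p := absne0 _ nz.
apply: (mulfI (negbT (gt_eqF p))); by rewrite -e mulfV // (negbT (gt_eqF p)).
Qed.
Lemma absX x n : abs (x ^+ n) = abs x ^+ n.
Proof. elim: n => [|n IH]; first by rewrite !expr0 abs1. by rewrite !exprS (absM HC) IH. Qed.
Lemma abs_max x y : abs (x + y) <= Num.max (abs x) (abs y). Proof. exact: abs_ultra. Qed.
Lemma abs_addl x y : abs y < abs x -> abs (x + y) = abs x.
Proof.
move=> lt; apply/eqP; rewrite eq_le; apply/andP; split.
  by apply: le_trans (abs_max x y) _; rewrite ge_max lexx ltW.
have e : x = (x + y) + - y by rewrite addrK.
have := abs_max (x + y) (- y); rewrite -e absN le_max => /orP [//|h].
by move: (lt_le_trans lt h); rewrite ltxx.
Qed.
Lemma abs2 : abs 2%:R = 2%:R^-1. Proof. exact: abs2. Qed.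
Lemma abs3 : abs 3%:R = 1.
Proof.
have e3 : (3%:R : K) = 2%:R + 1 by rewrite -natr1.
have le : abs (3%:R : K) <= 1.
  rewrite e3; apply: le_trans (abs_max _ _) _; rewrite ge_max abs1 lexx abs2 andbT.
  by rewrite invf_le1 // ler1n.
apply/eqP; rewrite eq_le le /=.
have e1 : (1 : K) = 3%:R + - 2%:R by rewrite e3 addrAC subrr add0r.
have := abs_max (3%:R : K) (- 2%:R); rewrite -e1 absN abs1 abs2 le_max => /orP [//|].
rewrite invf_ge1 // ?ler1n // (ler_nat R 2 1) // ltr0n.
Qed.
Lemma abs4 : abs 4%:R = 4%:R^-1.
Proof. by rewrite -[4%N]/(2*2)%N natrM (absM HC) abs2 -invfM -natrM. Qed.
Lemma absK3 n : abs (3%:R ^+ n : K) = 1.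
Proof. by rewrite absX abs3 expr1n. Qed.
Lemma nz2 : (2%:R : K) != 0.
Proof. apply/eqP=> e; have := abs2; rewrite e abs0 => /eqP; rewrite eq_sym invr_eq0 pnatr_eq0. done. Qed.
Lemma nz4 : (4%:R : K) != 0.
Proof. apply/eqP=> e; have := abs4; rewrite e abs0 => /eqP; rewrite eq_sym invr_eq0 pnatr_eq0. done. Qed.
Lemma nz3 : (3%:R : K) != 0.
Proof. apply/eqP=> e; have := abs3; rewrite e abs0 => /eqP; rewrite eq_sym oner_eq0. done. Qed.

Definition Hp (p : {poly K}) := (3%:R / 4%:R) *: (p * (p - 3%:R%:P)^+2).
Definition step (p : {poly K}) := - (3%:R *: 'X) + (1 + 'X) * Hp p.
Definition Vp n := iter n step (3%:R%:P).

Lemma Vp_eval n s : (Vp n).[s] = 2%:R * iter n (f_t (1 + s)) 1 + 1.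
Proof.
elim: n => [|n IH]; first by rewrite /= hornerC; ring.
rewrite [Vp _]/= -/(Vp n) /step /Hp !hornerE IH /=.
rewrite /f_t. move: (iter n _ _) => z. field. by rewrite nz4 nz2.
Qed.

Lemma Vp0 n : (Vp n.+1).[0] = 0.
Proof.
have st : forall p : {poly K}, (step p).[0] = 3%:R / 4%:R * (p.[0] * (p.[0] - 3%:R)^+2).
  by move=> p; rewrite /step /Hp !hornerE; ring.
elim: n => [|n IH]; first by rewrite [Vp 1]/= st hornerC subrr; ring.
by rewrite [Vp _]/= st -/(Vp n.+1) IH; ring.
Qed.

Definition dV n := ((Vp n)^`()).[0].

Lemma dV_step n : dV n.+1 = - 3%:R + 3%:R / 4%:R * ((Vp n).[0] * ((Vp n).[0] - 3%:R)^+2)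
   + 3%:R / 4%:R * (dV n * ((Vp n).[0] - 3%:R)^+2 + (Vp n).[0] * (2%:R * ((Vp n).[0] - 3%:R) * dV n)).
Proof.
rewrite /dV [Vp n.+1]/= -/(Vp n) /step /Hp !derivE. rewrite !(hornerD, hornerN, hornerM, hornerZ, hornerX, hornerC, hornerMn, expr2, horner_exp, hornerE). rewrite /=. ring.
Qed.
Lemma dV0 : dV 0 = 0.
Proof. by rewrite /dV /= derivC hornerC. Qed.

Lemma absdV n : abs (dV n.+1) = 4%:R ^+ n.
Proof.
elim: n => [|n IH].
  rewrite dV_step dV0 [Vp 0]/= hornerC subrr expr0.
  have -> : - (3%:R : K) + 3%:R / 4%:R * (3%:R * 0 ^+ 2) + 3%:R / 4%:R * (0 * 0 ^+ 2 + 3%:R * (2%:R * 0 * 0)) = - 3%:R by ring.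
  by rewrite absN abs3.
rewrite dV_step Vp0.
have -> : - (3%:R : K) + 3%:R / 4%:R * (0 * (0 - 3%:R) ^+ 2) +
  3%:R / 4%:R * (dV n.+1 * (0 - 3%:R) ^+ 2 + 0 * (2%:R * (0 - 3%:R) * dV n.+1))
  = 3%:R / 4%:R * (0 - 3%:R) ^+ 2 * dV n.+1 + - 3%:R by ring.
have ha : abs (3%:R / 4%:R * (0 - 3%:R) ^+ 2 * dV n.+1) = 4%:R ^+ n.+1.
  by rewrite !(absM HC) absV abs4 invrK sub0r absN abs3 IH exprS; ring.
rewrite abs_addl ha // absN abs3.
by rewrite exprn_egt1 // ltr1n.
Qed.
Lemma prod_bound (rs : seq K) (rho : R) : 0 <= rho ->
  (forall r, r \in rs -> rho < abs r) ->
  (\prod_(z <- rs) ('X - z%:P)).[0] != 0 /\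
  ((\prod_(z <- rs) ('X - z%:P))^`().[0] != 0 ->
    rho * abs (\prod_(z <- rs) ('X - z%:P))^`().[0] < abs (\prod_(z <- rs) ('X - z%:P)).[0]).
Proof.
move=> r0; elim: rs => [|r rs IH] Hr.
  by rewrite big_nil derivC hornerC oner_eq0 horner0 eqxx.
have [a0 Hb] := IH (fun z zi => Hr z (mem_behead (s:=r::rs) zi)).
have rr : rho < abs r by apply: Hr; rewrite inE eqxx.
have rnz : r != 0 by apply/eqP=> e; move: rr; rewrite e abs0 ltNge r0.
set q := \prod_(z <- rs) ('X - z%:P) in a0 Hb *.
rewrite big_cons derivM derivB derivX derivC subr0 mul1r.
rewrite !(hornerD, hornerM, hornerN, hornerX, hornerC) sub0r.
have pa := absne0 _ a0.
split; first by rewrite mulf_neq0 ?oppr_eq0.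
move=> _; rewrite (absM HC) absN.
have [b0|bnz] := eqVneq (q^`()).[0] 0.
  by rewrite b0 mulr0 addr0 ltr_pM2r.
have hb := Hb bnz.
have h1 : rho * abs q.[0] < abs r * abs q.[0] by rewrite ltr_pM2r.
have h2 : rho * abs (- r * q^`().[0]) < abs r * abs q.[0].
  by rewrite (absM HC) absN mulrCA ltr_pM2l //; exact: le_lt_trans r0 rr.
have := abs_max q.[0] (- r * q^`().[0]); rewrite le_max => /orP [h|h].
  by apply: le_lt_trans h1; rewrite ler_wpM2l.
by apply: le_lt_trans h2; rewrite ler_wpM2l.
Qed.
Lemma small_root (p : {poly K}) : (p^`()).[0] != 0 -> p.[0] != 0 ->
  exists r, root p r /\ r != 0 /\ abs r * abs (p^`()).[0] <= abs p.[0].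
Proof.
move=> b0 a0.
have pnz : p != 0 by apply: contraNneq a0 => ->; rewrite horner0.
have [rs Dp] := closed_field_poly_normal p.
have cnz : lead_coef p != 0 by rewrite lead_coef_eq0.
set rho := abs p.[0] / abs (p^`()).[0].
have pb := absne0 _ b0.
have r0 : 0 <= rho by rewrite divr_ge0 // abs_ge0.
case: (boolP (has (fun r => abs r <= rho) rs)) => [/hasP [r ri hr]|/hasPn hn].
  have rt : root p r by rewrite Dp rootZ // root_prod_XsubC.
  exists r; split => //; split.
    by apply/eqP=> e; move: rt; rewrite e => /rootP h; rewrite h eqxx in a0.
  by rewrite -ler_pdivlMr.
have Hr : forall r, r \in rs -> rho < abs r by move=> r /hn; rewrite -ltNge.
have [_ H] := @prod_bound rs rho r0 Hr.
move: (lead_coef p) cnz Dp => c cnz Dp.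
set q := \prod_(z <- rs) ('X - z%:P) in Dp H.
have e0 : p.[0] = c * q.[0] by rewrite Dp hornerZ.
have e1 : p^`().[0] = c * q^`().[0] by rewrite Dp derivZ hornerZ.
have q1 : q^`().[0] != 0 by apply: contraNneq b0 => h; rewrite e1 h mulr0.
have := H q1.
have pc := absne0 _ cnz.
rewrite -(ltr_pM2l pc) mulrCA -!(absM HC) -e0 -e1 /rho mulfVK ?ltxx //.
exact: negbT (gt_eqF pb).
Qed.
Lemma f_alt (t z : K) : f_t t z = 3%:R * t * z ^+ 3 + (- (3%:R ^+ 2 / 2%:R) * t * z ^+ 2 + 1).
Proof. rewrite /f_t; field; exact: nz2. Qed.

Lemma f_escape (t z : K) : abs t = 1 -> 2%:R < abs z -> abs (f_t t z) = abs z ^+ 3.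
Proof.
move=> ht hz.
have z0 : 0 < abs z by apply: lt_trans hz; rewrite ltr0n.
have h2 : abs (- (3%:R ^+ 2 / 2%:R) * t * z ^+ 2 : K) = 2%:R * abs z ^+ 2.
  by rewrite !(absM HC, absN) absV abs2 invrK abs3 ht; ring.
have h3 : abs (3%:R * t * z ^+ 3 : K) = abs z ^+ 3 by rewrite !(absM HC) abs3 ht; ring.
rewrite f_alt abs_addl h3 //.
apply: le_lt_trans (abs_max _ _) _; rewrite gt_max h2 abs1.
move: (abs z) hz => a ha.
have aa : 0 < a * a by nra.
rewrite !exprS expr0 !mulr1; apply/andP; split; nra.
Qed.

Lemma f_escape_iter (t z : K) k : abs t = 1 -> 2%:R < abs z ->
  2%:R < abs (iter k (f_t t) z) /\ abs z + k%:R <= abs (iter k (f_t t) z).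
Proof.
move=> ht hz; elim: k => [|k [IH1 IH2]]; first by rewrite addr0.
set w := iter k _ _ in IH1 IH2 *.
rewrite [iter k.+1 _ _]/= -/w f_escape //.
have w0 : 1 < abs w by apply: lt_trans IH1; rewrite ltr1n.
have : abs w + 1 <= abs w ^+ 3.
  rewrite exprSr expr2.
  have : 4%:R < abs w * abs w.
    have -> : (4%:R : R) = 2%:R * 2%:R by rewrite -natrM.
    apply: lt_trans (_ : 2%:R * abs w < _); first by rewrite ltr_pM2l.
    by rewrite ltr_pM2r // (lt_trans _ w0).
  move=> h4; nra.
move=> h; split; first by apply: lt_le_trans h; apply: lt_le_trans IH1 _; rewrite lerDl.
by apply: le_trans h; rewrite -natr1 addrA lerD2r.
Qed.
Lemma root_Vp N (c : K) : c != 0 -> exists s, s != 0 /\ (Vp N.+1).[s] = c /\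
   abs s * 4%:R ^+ N <= abs c.
Proof.
move=> cnz.
have e1 : ((Vp N.+1 - c%:P)^`()).[0] = dV N.+1 by rewrite derivB derivC subr0.
have e0 : (Vp N.+1 - c%:P).[0] = - c by rewrite hornerD hornerN hornerC Vp0 add0r.
have d0 : dV N.+1 != 0.
  apply/eqP=> e; have := absdV N; rewrite e abs0 => /eqP; rewrite eq_sym expf_eq0 pnatr_eq0 andbF //.
have h1 : ((Vp N.+1 - c%:P)^`()).[0] != 0 by rewrite e1.
have h0 : (Vp N.+1 - c%:P).[0] != 0 by rewrite e0 oppr_eq0.
have [s [rt [snz hs]]] := small_root _ h1 h0.
exists s; split => //; split.
  by move/rootP: rt; rewrite hornerD hornerN hornerC => /eqP; rewrite subr_eq0 => /eqP.
by move: hs; rewrite e1 e0 absN absdV.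
Qed.

Lemma iter_period (T : Type) (g : T -> T) x P : iter P g x = x ->
  forall n, iter n g x = iter (n %% P) g x.
Proof.
move=> h n; rewrite {1}(divn_eq n P) addnC iterD; congr (iter _ g _).
elim: (n %/ P)%N => [|q IH] //; by rewrite mulSn iterD IH h.
Qed.

Lemma f0 (t : K) : f_t t 0 = 1.
Proof. rewrite /f_t; ring. Qed.

Lemma M_of_periodic (t : K) P : iter P.+1 (f_t t) 1 = 1 -> in_M abs t.
Proof.
move=> h.
set B := \sum_(i < P.+1) abs (iter i (f_t t) 1).
have hB : forall n, abs (iter n (f_t t) 1) <= B.
  move=> n; rewrite (iter_period _ _ _ _ h n).
  have lt : (n %% P.+1 < P.+1)%N by rewrite ltn_mod.
  rewrite /B (bigD1 (Ordinal lt)) //= lerDl sumr_ge0 // => i _; exact: abs_ge0.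
split; last by exists B.
exists B => -[|n]; first by rewrite /= abs0; apply: le_trans (hB 0%N); exact: abs_ge0.
by rewrite iterSr f0.
Qed.

Lemma notM_of_escape (t : K) N : abs t = 1 -> 2%:R < abs (iter N (f_t t) 1) -> ~ in_M abs t.
Proof.
move=> ht hz [_ [B hB]].
have B0 : 0 <= B by apply: le_trans (hB 0%N); exact: abs_ge0.
have [_ h] := f_escape_iter _ _ (Num.bound B) ht hz.
have := hB (Num.bound B + N)%N; rewrite iterD => hle.
have := archi_boundP B0.
move=> hb; have := le_trans h hle.
have : 0 <= abs (iter N (f_t t) 1) by exact: abs_ge0.
move=> a b; move: hb; rewrite ltNge => /negP; apply.
apply: le_trans b; rewrite lerDr //.
Qed.
Lemma in_M_one : in_M abs 1.
Proof.
have e1 : f_t 1 1 = - (2%:R : K)^-1 by rewrite /f_t; field; exact: nz2.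
have e2 : f_t 1 (- (2%:R : K)^-1) = - (2%:R : K)^-1 by rewrite /f_t; field; exact: nz2.
have it : forall n, iter n.+1 (f_t 1) 1 = - (2%:R : K)^-1.
  by elim=> [|n IH] //; rewrite iterS IH e2.
have hb : forall n, abs (iter n (f_t 1) 1) <= 2%:R.
  case=> [|n]; first by rewrite /= abs1 ler1n.
  by rewrite it absN absV abs2 invrK.
split; exists 2%:R => // -[|n]; first by rewrite /= abs0 ler0n.
by rewrite iterSr f0.
Qed.

Lemma abs_sub1 (s : K) : abs (1 + s - 1) = abs s.
Proof. by rewrite (addrC 1 s) addrK. Qed.
Lemma main_aux : in_M abs 1 /\
  (forall r : R, 0 < r ->
     (exists t : K, abs (t - 1) < r /\ ~ in_M abs t) /\
     (exists t : K, abs (t - 1) < r /\ t <> 1 /\ in_M abs t)).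
Proof.
split; first exact: in_M_one.
move=> r r0.
set r' := Num.min r 1.
have r'0 : 0 < r' by rewrite lt_min r0 ltr01.
have r'r : r' <= r by rewrite ge_min lexx.
have r'1 : r' <= 1 by rewrite ge_min lexx orbT.
set N := Num.bound (2%:R / r').
have hN : 2%:R / r' < N%:R by apply: archi_boundP; rewrite divr_ge0 // ltW.
have hN4 : (N%:R : R) <= 4%:R ^+ N by rewrite -natrX ler_nat ltnW // ltn_expl.
have key : 2%:R < r' * 4%:R ^+ N.
  have := lt_le_trans hN hN4; rewrite ltr_pdivrMr // mulrC //.
have p4 : 0 < (4%:R : R) ^+ N by rewrite exprn_gt0.
have small : forall s : K, abs s * 4%:R ^+ N <= 2%:R -> abs s < r'.
  move=> s hs; rewrite -(ltr_pM2r p4); exact: le_lt_trans hs key.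
have solve : forall (s c : K), (Vp N.+1).[s] = c ->
    iter N.+1 (f_t (1 + s)) 1 = (c - 1) / 2%:R.
  move=> s c; rewrite Vp_eval => <-; field; exact: nz2.
split.
  have c0 : (2%:R : K)^-1 != 0 by rewrite invr_eq0 nz2.
  have [s [snz [hv hs]]] := root_Vp N _ c0.
  have hs' : abs s < r' by apply: small; rewrite absV abs2 invrK in hs.
  have ht : abs (1 + s) = 1 by rewrite abs_addl abs1 //; apply: lt_le_trans hs' r'1.
  exists (1 + s); split; first by rewrite abs_sub1; exact: lt_le_trans hs' r'r.
  apply: notM_of_escape _ N.+1 ht _.
  rewrite (solve _ _ hv).
  have -> : ((2%:R : K)^-1 - 1) / 2%:R = - (4%:R)^-1.
    by field; rewrite nz4 nz2.
  rewrite absN absV abs4 // invrK ltr_nat //.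
have c0 : (3%:R : K) != 0 by exact: nz3.
have [s [snz [hv hs]]] := root_Vp N _ c0.
have hs' : abs s < r'.
  apply: small; apply: le_trans hs _; rewrite abs3 // ler1n //.
exists (1 + s); split; first by rewrite abs_sub1; exact: lt_le_trans hs' r'r.
split.
  move=> e; move: snz; have -> : s = (1 + s) - 1 by rewrite (addrC 1 s) addrK.
  by rewrite e subrr eqxx.
apply: (@M_of_periodic (1 + s) N).
by rewrite (solve _ _ hv); field; rewrite nz2.
Qed.
End S.

Theorem mainTheorem1 (R : realType) (K : closedFieldType) (abs : K -> R) :
  is_C2 abs ->
  in_M abs 1 /\
  (forall r : R, 0 < r ->
     (exists t : K, abs (t - 1) < r /\ ~ in_M abs t) /\
     (exists t : K, abs (t - 1) < r /\ t <> 1 /\ in_M abs t)).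
Proof. exact: main_aux. Qed.
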